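(* For every $2\le n\le N$, as an identity of rational functions of $x$, $$\mathbb K_{n-1}(x)=\mathscr C_{2,n}(x)\,K_n(x)+\mathscr D_{2,n}(x)\,K_{n-1}(x),$$ where $\mathscr C_{2,n}(x)=-\dfrac{\mathscr D_{1,n-1}(x)}{\beta_{n-1}}$ and $\mathscr D_{2,n}(x)=\mathscr C_{1,n-1}(x)+\mathscr C_{2,n}(x)\,(\alpha_{n-1}-x)$.
   Context: Fix an integer $N\ge 1$ and $0<p<1$. Notation: $(a)_0=1$, $(a)_k=a(a+1)\cdots(a+k-1)$ (Pochhammer symbol); $[z]_0=1$, $[z]_k=z(z-1)\cdots(z-k+1)$ (falling factorial). For a function $f$, $\Delta f(x)=f(x+1)-f(x)$, $\nabla f(x)=f(x)-f(x-1)$, $\Delta^0$ is the identity and $\Delta^k=\Delta\circ\Delta^{k-1}$. For $0\le n\le N$ the monic Kravchuk polynomial is $K_n(x)=p^n(-N)_n\sum_{k=0}^{n}\frac{(-n)_k(-x)_k}{(-N)_k\,k!}p^{-k}$, and $K_{-1}=0$; these are monic of degree $n$ and orthogonal on $\{0,\dots,N\}$ with respect to the binomial weight $w(x)=\binom{N}{x}p^x(1-p)^{N-x}$, with $\|K_n\|^2=\sum_{x=0}^N K_n(x)^2w(x)=n!(-N)_np^n(p-1)^n$. They satisfy $xK_n=K_{n+1}+\alpha_nK_n+\beta_nK_{n-1}$ with $\alpha_n=p(N-n)+n(1-p)$, $\beta_n=np(1-p)(N-n+1)$. For $1\le n\le N+1$ and integers $i,l\ge0$, $\mathscr K_{n-1}^{(i,l)}(x,y)=\sum_{k=0}^{n-1}\frac{\Delta^iK_k(x)\,\Delta^lK_k(y)}{\|K_k\|^2}$.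 Fix $\lambda,\mu>0$ and an integer $j\ge 0$. On real polynomials define $\langle f,g\rangle_{\lambda,\mu}=\sum_{x=0}^N f(x)g(x)w(x)+\lambda\Delta^jf(0)\Delta^jg(0)+\mu\Delta^jf(N)\Delta^jg(N)$. For $0\le n\le N$, $\mathbb K_n=\mathbb K_n^{(j)}$ is the monic polynomial of degree $n$ with $\langle\mathbb K_n,q\rangle_{\lambda,\mu}=0$ for all polynomials $q$ of degree $<n$ (Kravchuk–Sobolev polynomials). For $1\le n\le N$: $\mathscr A_n(x,y)=\frac{j!}{\|K_{n-1}\|^2[x-y]_{j+1}}\sum_{k=0}^{j}\frac{\Delta^kK_{n-1}(y)}{k!}[x-y]_k$, $\mathscr B_n(x,y)=-\frac{j!}{\|K_{n-1}\|^2[x-y]_{j+1}}\sum_{k=0}^{j}\frac{\Delta^kK_{n}(y)}{k!}[x-y]_k$; $k_{00}=\mathscr K^{(j,j)}_{n-1}(0,0)$, $k_{0N}=\mathscr K^{(j,j)}_{n-1}(0,N)$, $k_{N0}=\mathscr K^{(j,j)}_{n-1}(N,0)$, $k_{NN}=\mathscr K^{(j,j)}_{n-1}(N,N)$, $d_0=\Delta^jK_n(0)$, $d_N=\Delta^jK_n(N)$, $\delta_n=(1+\lambda k_{00})(1+\mu k_{NN})-\lambda\mu k_{0N}k_{N0}$ (which is nonzero), $\Phi_1(n)=\frac{d_0(1+\mu k_{NN})-\mu k_{0N}d_N}{\delta_n}$, $\Phi_2(n)=\frac{(1+\lambda k_{00})d_N-\lambda k_{N0}d_0}{\delta_n}$;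 $\mathscr C_{1,n}(x)=1-\lambda\Phi_1(n)\mathscr A_n(x,0)-\mu\Phi_2(n)\mathscr A_n(x,N)$ and $\mathscr D_{1,n}(x)=-\lambda\Phi_1(n)\mathscr B_n(x,0)-\mu\Phi_2(n)\mathscr B_n(x,N)$. *)

(* Defs.v *)
From HB Require Import structures.
From mathcomp Require Import all_boot all_order all_algebra.
Set Implicit Arguments. Unset Strict Implicit. Unset Printing Implicit Defensive.
Import Order.TTheory GRing.Theory Num.Theory.
Local Open Scope ring_scope.

Section KS.
Variable R : realFieldType.

Definition poch (a : R) (k : nat) : R := \prod_(i < k) (a + i%:R).
Definition fall (z : R) (k : nat) : R := \prod_(i < k) (z - i%:R).

Definition fdelta (f : R -> R) : R -> R := fun x => f (x + 1) - f x.
Definition fdeltan (k : nat) (f : R -> R) : R -> R := iter k fdelta f.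

Variables (N : nat) (p lam mu : R) (j : nat).

(* monic Kravchuk polynomial K_n, as a function of x *)
Definition Krav (n : nat) (x : R) : R :=
  p ^+ n * poch (- N%:R) n *
  \sum_(k < n.+1) (poch (- n%:R) k * poch (- x) k /
                   (poch (- N%:R) k * k`!%:R) * p ^- k).

Definition wgt (x : nat) : R := 'C(N, x)%:R * p ^+ x * (1 - p) ^+ (N - x).

Definition knorm (n : nat) : R := \sum_(x < N.+1) Krav n x%:R ^+ 2 * wgt x.

Definition alpha (n : nat) : R := p * (N%:R - n%:R) + n%:R * (1 - p).
Definition beta (n : nat) : R := n%:R * p * (1 - p) * (N%:R - n%:R + 1).

Definition kern (m i l : nat) (x y : R) : R :=
  \sum_(k < m.+1) fdeltan i (Krav k) x * fdeltan l (Krav k) y / knorm k.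

Definition sob_ip (f g : R -> R) : R :=
  \sum_(x < N.+1) f x%:R * g x%:R * wgt x
  + lam * fdeltan j f 0 * fdeltan j g 0
  + mu * fdeltan j f N%:R * fdeltan j g N%:R.

Definition is_KravSob (n : nat) (Q : {poly R}) : Prop :=
  Q \is monic /\ size Q = n.+1 /\
  forall q : {poly R}, (size q <= n)%N -> sob_ip (horner Q) (horner q) = 0.

Definition sA (n : nat) (x y : R) : R :=
  j`!%:R / (knorm n.-1 * fall (x - y) j.+1) *
  \sum_(k < j.+1) (fdeltan k (Krav n.-1) y / k`!%:R * fall (x - y) k).

Definition sB (n : nat) (x y : R) : R :=
  - (j`!%:R / (knorm n.-1 * fall (x - y) j.+1)) *
  \sum_(k < j.+1) (fdeltan k (Krav n) y / k`!%:R * fall (x - y) k).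

Definition k00 (n : nat) : R := kern n.-1 j j 0 0.
Definition k0N (n : nat) : R := kern n.-1 j j 0 N%:R.
Definition kN0 (n : nat) : R := kern n.-1 j j N%:R 0.
Definition kNN (n : nat) : R := kern n.-1 j j N%:R N%:R.
Definition d0 (n : nat) : R := fdeltan j (Krav n) 0.
Definition dN (n : nat) : R := fdeltan j (Krav n) N%:R.

Definition deltaS (n : nat) : R :=
  (1 + lam * k00 n) * (1 + mu * kNN n) - lam * mu * k0N n * kN0 n.

Definition Phi1 (n : nat) : R :=
  (d0 n * (1 + mu * kNN n) - mu * k0N n * dN n) / deltaS n.
Definition Phi2 (n : nat) : R :=
  ((1 + lam * k00 n) * dN n - lam * kN0 n * d0 n) / deltaS n.

Definition C1 (n : nat) (x : R) : R :=
  1 - lam * Phi1 n * sA n x 0 - mu * Phi2 n * sA n x N%:R.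
Definition D1 (n : nat) (x : R) : R :=
  - lam * Phi1 n * sB n x 0 - mu * Phi2 n * sB n x N%:R.

Definition C2 (n : nat) (x : R) : R := - D1 n.-1 x / beta n.-1.
Definition D2 (n : nat) (x : R) : R := C1 n.-1 x + C2 n x * (alpha n.-1 - x).

End KS.

(* Main.v *)
Require Import Defs.
From HB Require Import structures.
From mathcomp Require Import all_boot all_order all_algebra.
From mathcomp Require Import ring lra zify.
Unset Printing Implicit Defensive.
Import Order.TTheory GRing.Theory Num.Theory.
Local Open Scope ring_scope.
Section Basic.
Context {R : realFieldType}.

Lemma poch0 (a : R) : poch a 0 = 1.
Proof. by rewrite /poch big_ord0. Qed.
Lemma pochS (a : R) k : poch a k.+1 = poch a k * (a + k%:R).
Proof. by rewrite /poch big_ord_recr. Qed.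
Lemma pochSl (a : R) k : poch a k.+1 = a * poch (a + 1) k.
Proof.
rewrite /poch big_ord_recl /= addr0; congr (_ * _).
by apply: eq_bigr => i _; rewrite /= /bump /= add1n -natr1; ring.
Qed.
Lemma fall0 (a : R) : fall a 0 = 1.
Proof. by rewrite /fall big_ord0. Qed.
Lemma fallS (a : R) k : fall a k.+1 = fall a k * (a - k%:R).
Proof. by rewrite /fall big_ord_recr. Qed.
Lemma fallSl (a : R) k : fall a k.+1 = a * fall (a - 1) k.
Proof.
rewrite /fall big_ord_recl /= subr0; congr (_ * _).
by apply: eq_bigr => i _; rewrite /= /bump /= add1n -natr1; ring.
Qed.

Lemma poch_negn_zero k l : (k < l)%N -> poch (- (k%:R : R)) l = 0.
Proof.
elim: l => // l IH; rewrite ltnS leq_eqVlt pochS => /orP [/eqP <-|/IH ->].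
  by rewrite addNr mulr0.
by rewrite mul0r.
Qed.

Lemma poch_negN_neq0 (N l : nat) : (l <= N)%N -> poch (- (N%:R : R)) l != 0.
Proof.
elim: l => [|l IH] H; first by rewrite poch0 oner_neq0.
rewrite pochS mulf_neq0 ?IH 1?ltnW //.
rewrite addrC subr_eq0 eqr_nat; apply/negP => /eqP E.
by move: H; rewrite E ltnn.
Qed.

Lemma fact_neq0 k : (k`!%:R : R) != 0.
Proof. by rewrite pnatr_eq0 -lt0n fact_gt0. Qed.

Lemma fdeltanS (f : R -> R) k y :
  fdeltan k.+1 f y = fdeltan k f (y + 1) - fdeltan k f y.
Proof. by []. Qed.
Lemma fdeltan0 (f : R -> R) y : fdeltan 0 f y = f y.
Proof. by []. Qed.

Lemma fdeltan_loc (f g : R -> R) k y :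
  (forall i, (i <= k)%N -> f (y + i%:R) = g (y + i%:R)) ->
  fdeltan k f y = fdeltan k g y.
Proof.
elim: k y => [|k IH] y H.
  by rewrite !fdeltan0; move: (H 0%N (leqnn _)); rewrite addr0.
have H1 : fdeltan k f y = fdeltan k g y.
  by apply: IH => i Hi; apply: H; apply: leqW.
have H2 : fdeltan k f (y + 1) = fdeltan k g (y + 1).
  apply: IH => i Hi; move: (H i.+1 Hi).
  by rewrite -natr1 [_ + 1]addrC addrA.
by rewrite !fdeltanS H1 H2.
Qed.

Lemma fdeltan_ext (f g : R -> R) k y :
  (forall z, f z = g z) -> fdeltan k f y = fdeltan k g y.
Proof. by move=> H; apply: fdeltan_loc. Qed.

Lemma fdeltan_lin (f g : R -> R) a b k y :
  fdeltan k (fun z => a * f z + b * g z) y = a * fdeltan k f y + b * fdeltan k g y.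
Proof.
elim: k y => [|k IH] y //; rewrite !fdeltanS !IH; ring.
Qed.

Lemma fdeltan_sum M (F : 'I_M -> R -> R) (c : 'I_M -> R) k y :
  fdeltan k (fun z => \sum_(i < M) c i * F i z) y = \sum_(i < M) c i * fdeltan k (F i) y.
Proof.
elim: k y => [|k IH] y //; rewrite !fdeltanS !IH -sumrB.
by apply: eq_bigr => i _; rewrite mulrBr.
Qed.

End Basic.
Section Quot.
Context {R : realFieldType}.

Lemma key_sum (u : R) (d : nat -> R) j :
  u * \sum_(k < j.+1) ((d k + d k.+1) / k`!%:R * fall (u - 1) k)
  - (u - j.+1%:R) * \sum_(k < j.+1) (d k / k`!%:R * fall u k)
  = j.+1%:R * \sum_(k < j.+2) (d k / k`!%:R * fall u k).
Proof.
set e := fun k => d k / k`!%:R * fall u k.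
have A : u * \sum_(k < j.+1) ((d k + d k.+1) / k`!%:R * fall (u - 1) k)
   = \sum_(k < j.+1) ((u - k%:R) * e k) + \sum_(k < j.+1) (k.+1%:R * e k.+1).
  rewrite mulr_sumr -big_split; apply: eq_bigr => k _ /=.
  have HF : fall u k * (u - k%:R) = u * fall (u - 1) k by rewrite -fallS fallSl.
  rewrite /e fallSl factS natrM.
  rewrite [X in _ = X + _](_ : _ = d k / k`!%:R * (fall u k * (u - k%:R))); last by ring.
  rewrite HF; field.
  by rewrite fact_neq0 nat1r pnatr_eq0.
have B : \sum_(k < j.+1) (k.+1%:R * e k.+1) = \sum_(k < j.+2) (k%:R * e k).
  by rewrite [RHS]big_ord_recl /= mul0r add0r.
have D : \sum_(k < j.+2) (k%:R * e k) = \sum_(k < j.+1) (k%:R * e k) + j.+1%:R * e j.+1.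
  by rewrite big_ord_recr.
have E : \sum_(k < j.+2) (d k / k`!%:R * fall u k) = \sum_(k < j.+1) e k + e j.+1.
  by rewrite big_ord_recr.
have F : \sum_(k < j.+1) (d k / k`!%:R * fall u k) = \sum_(k < j.+1) e k by [].
rewrite A B D E F.
have C : \sum_(k < j.+1) ((u - k%:R) * e k) + \sum_(k < j.+1) (k%:R * e k)
   = u * \sum_(k < j.+1) e k.
  by rewrite -big_split mulr_sumr; apply: eq_bigr => k _ /=; ring.
rewrite addrA C; ring.
Qed.

Lemma fdeltan_quot (x : R) (g : R -> R) j y :
  fall (x - y) j.+1 != 0 ->
  fdeltan j (fun z => g z / (x - z)) y =
  j`!%:R / fall (x - y) j.+1 * \sum_(k < j.+1) (fdeltan k g y / k`!%:R * fall (x - y) k).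
Proof.
elim: j y => [|j IH] y.
  rewrite fdeltan0 big_ord1 fallS !fall0 mul1r subr0 => H.
  by rewrite fdeltan0 /= fact0 divr1 mulr1 mul1r mulrC.
move=> Hf.
set u := x - y.
have Hf' := Hf; rewrite -/u fallSl mulf_eq0 negb_or in Hf'.
case/andP: Hf' => Hu HF1.
have Hf'' := Hf; rewrite -/u fallS mulf_eq0 negb_or in Hf''.
case/andP: Hf'' => HF0 Huj.
have Exy : x - (y + 1) = u - 1 by rewrite /u opprD addrA.
rewrite fdeltanS (IH (y + 1)); last by rewrite Exy.
rewrite (IH y) // Exy -/u.
have Ed : forall k, fdeltan k g (y + 1) = fdeltan k g y + fdeltan k.+1 g y.
  by move=> k; rewrite fdeltanS; ring.
under eq_bigr do rewrite Ed.
have K := key_sum u (fun k => fdeltan k g y) j.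
set S1 := \sum_(k < j.+1) _ in K *.
set S0 := \sum_(k < j.+1) _ in K *.
set S2 := \sum_(k < j.+2) _ in K *.
have E1 : fall u j.+2 = u * fall (u - 1) j.+1 by rewrite fallSl.
have E2 : fall u j.+1 = u * fall (u - 1) j.+1 / (u - j.+1%:R).
  by rewrite -E1 [fall u j.+2]fallS mulfK.
rewrite E1 E2 factS natrM.
have -> : j.+1%:R * j`!%:R / (u * fall (u - 1) j.+1) * S2
   = j`!%:R / (u * fall (u - 1) j.+1) * (j.+1%:R * S2) by ring.
rewrite -K; field.
by rewrite Hu HF1 nat1r Huj.
Qed.

End Quot.
Section Coef.
Context {R : realFieldType}.
Variables (N : nat) (p : R).
Hypothesis p0 : 0 < p.

Definition cc (n l : nat) : R :=
  p ^+ n * poch (- N%:R) n * (poch (- n%:R) l / (poch (- N%:R) l * l`!%:R) * p ^- l).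

Lemma cc_zero n l : (n < l)%N -> cc n l = 0.
Proof. by move=> H; rewrite /cc (poch_negn_zero _ _ H) !mul0r mulr0. Qed.

Lemma Krav_sum n M x : (n < M)%N ->
  Krav N p n x = \sum_(l < M) cc n l * poch (- x) l.
Proof.
move=> H; rewrite -(subnKC H) big_split_ord /=.
rewrite [X in _ = _ + X]big1 ?addr0; last first.
  by move=> i _; rewrite cc_zero ?mul0r // ltnS leq_addr.
rewrite /Krav mulr_sumr; apply: eq_bigr => i _ /=; rewrite /cc; ring.
Qed.

Lemma pochSn (n l : nat) : poch (- (n.+1%:R : R)) l.+1 = - n.+1%:R * poch (- n%:R) l.
Proof. rewrite pochSl; congr (_ * poch _ _); rewrite -natr1; ring. Qed.

Lemma cc_rec k l : (k.+1 <= N)%N ->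
  l%:R * cc k l - (if l is l'.+1 then cc k l' else 0)
  = cc k.+1 l + alpha N p k * cc k l + beta N p k * cc k.-1 l.
Proof.
move=> HkN.
have pn0 : p != 0 by rewrite gt_eqF.
case: (ltnP k.+1 l) => Hl.
  have h1 : cc k l = 0 by rewrite cc_zero // ltnW.
  have h2 : cc k.+1 l = 0 by rewrite cc_zero.
  have h3 : cc k.-1 l = 0 by rewrite cc_zero // (leq_ltn_trans (leq_pred k)) // ltnW.
  case: l Hl h1 h2 h3 => // l' Hl h1 h2 h3; rewrite h1 h2 h3 cc_zero //; ring.
case: k HkN Hl => [|k'] HkN Hl.
  case: l Hl => [|[|l']] Hl //.
  - by rewrite /cc /beta /alpha /= !pochS !poch0 !fact0 !expr0 !expr1; field.
  - rewrite /cc /beta /alpha /= !pochS !poch0 !factS !fact0 !expr0 !expr1; field.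
    by rewrite pn0 pnatr_eq0 -lt0n.
case: l Hl => [|[|l']] Hl.
- by rewrite /cc /beta /alpha /= !pochS !poch0 !fact0 !expr0 !exprS; field.
- rewrite /cc /beta /alpha /= !pochS !poch0 !factS !fact0 !expr0 !exprS; field.
  by rewrite pn0 /= pnatr_eq0; lia.
have hl : (l'%:R : R) <= k'%:R by rewrite ler_nat.
have hk : (k'%:R : R) + 2 <= N%:R.
  by rewrite -[2]/(2%:R) -natrD ler_nat addn2.
have h0l : (0 : R) <= l'%:R by [].
have h0k : (0 : R) <= k'%:R by [].
have r1 : poch (-(k'.+1%:R : R)) l' = - k'.+1%:R * poch (- k'%:R) l' / (- k'.+1%:R + l'%:R).
  rewrite -pochSn pochS mulfK //; apply: ltr0_neq0; rewrite -natr1; lra.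
have r2 : poch (-(k'.+2%:R : R)) l' = - k'.+2%:R * poch (- k'.+1%:R) l' / (- k'.+2%:R + l'%:R).
  rewrite -pochSn pochS mulfK //; apply: ltr0_neq0; rewrite -!natr1; lra.
have hP : poch (- (N%:R : R)) l' != 0.
  by apply: poch_negN_neq0; lia.
rewrite /cc /beta /alpha /= !pochS r2 r1 !factS !exprS; field.
rewrite hP expf_neq0 // pn0 fact_neq0 /=.
repeat (apply/andP; split); first [apply: lt0r_neq0; lra | apply: ltr0_neq0; lra].
Qed.

End Coef.
Section Rec.
Context {R : realFieldType}.
Variables (N : nat) (p : R).
Hypothesis p0 : 0 < p.

Lemma pb_x (x : R) l : x * poch (-x) l = l%:R * poch (-x) l - poch (-x) l.+1.
Proof. rewrite pochS; ring. Qed.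

Lemma Krav_rec k x : (k.+1 <= N)%N ->
  x * Krav N p k x = Krav N p k.+1 x + alpha N p k * Krav N p k x
                     + beta N p k * Krav N p k.-1 x.
Proof.
move=> HkN.
rewrite [in LHS](Krav_sum N p k k.+3 x); last lia.
rewrite (Krav_sum N p k.+1 k.+4 x); last lia.
rewrite (Krav_sum N p k k.+4 x); last lia.
rewrite (Krav_sum N p k.-1 k.+4 x); last lia.
rewrite !mulr_sumr -!big_split /=.
transitivity (\sum_(l < k.+4) ((l%:R * cc N p k l - (if nat_of_ord l is l'.+1 then cc N p k l' else 0))
                  * poch (-x) l)); last first.
  by apply: eq_bigr => l _; rewrite cc_rec //; ring.
rewrite [RHS]big_ord_recr /= (cc_zero N p k k.+3); last lia.
rewrite (cc_zero N p k k.+2); last lia.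
rewrite mulr0 subrr mul0r addr0.
have E1 : \sum_(l < k.+3) x * (cc N p k l * poch (- x) l)
   = \sum_(l < k.+3) l%:R * cc N p k l * poch (-x) l
     - \sum_(l < k.+3) cc N p k l * poch (-x) l.+1.
  rewrite -sumrB; apply: eq_bigr => -[l Hl] _ /=; rewrite mulrCA pb_x; ring.
have E2 : \sum_(l < k.+3) (l%:R * cc N p k l - (if nat_of_ord l is l'.+1 then cc N p k l' else 0))
                  * poch (-x) l
   = \sum_(l < k.+3) l%:R * cc N p k l * poch (-x) l
     - \sum_(l < k.+3) (if nat_of_ord l is l'.+1 then cc N p k l' else 0) * poch (-x) l.
  by rewrite -sumrB; apply: eq_bigr => l _; rewrite mulrBl.
rewrite E1 E2; congr (_ - _).
rewrite big_ord_recr [in RHS]big_ord_recl /= (cc_zero N p k k.+2); last lia.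
by rewrite !mul0r addr0 add0r; apply: eq_bigr => i _; rewrite add0n /bump add1n.
Qed.

Lemma Krav0 x : Krav N p 0 x = 1.
Proof.
by rewrite /Krav big_ord1 /= !poch0 expr0 fact0 !mul1r invr1 !mulr1.
Qed.

End Rec.
Section Diff.
Context {R : realFieldType}.
Variables (N : nat) (p : R).
Hypothesis p0 : 0 < p.

Lemma cc_diff n l : (n <= N)%N ->
  (n%:R - l%:R) * cc N p n l = p * l.+1%:R * (N%:R - l%:R) * cc N p n l.+1.
Proof.
move=> HnN.
have pn0 : p != 0 by rewrite gt_eqF.
case: (ltnP n l) => Hl.
  by rewrite !cc_zero ?mulr0 //; lia.
rewrite leq_eqVlt in Hl; case/orP: Hl => [/eqP ->|Hl].
  by rewrite subrr mul0r (cc_zero N p _ _ (ltnSn _)) mulr0.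
have hP : poch (- (N%:R : R)) l != 0 by apply: poch_negN_neq0; lia.
have hl : (l%:R : R) + 1 <= N%:R by rewrite natr1 ler_nat; lia.
rewrite /cc !pochS factS !exprS natrM; field.
rewrite hP pn0 fact_neq0 /=.
have h0 : (0 : R) <= l%:R by [].
repeat (apply/andP; split); first [done | by rewrite expf_neq0 | apply: lt0r_neq0; lra | apply: ltr0_neq0; lra].
Qed.

Definition Lop (f : R -> R) (x : R) : R :=
  p * (N%:R - x) * (f (x + 1) - f x) - (1 - p) * x * (f x - f (x - 1)).

Lemma Lpb l (x : R) :
  p * (N%:R - x) * (poch (- (x + 1)) l - poch (-x) l)
  - (1 - p) * x * (poch (-x) l - poch (- (x - 1)) l)
  = - l%:R * poch (-x) l - p * l%:R * (N%:R - l%:R + 1) * poch (-x) l.-1.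
Proof.
case: l => [|l]; first by rewrite !poch0; ring.
have a1 : poch (-(x+1)) l.+1 = -(x+1) * poch (-x) l.
  by rewrite pochSl; congr (_ * poch _ _); ring.
have a3 : poch (-(x-1)) l.+1 = poch (-x + 1) l * (-x + 1 + l%:R).
  by rewrite pochS; congr (poch _ _ * _); ring.
have a4 : poch (-x) l.+1 = -x * poch (-x + 1) l by rewrite pochSl.
have a2 : poch (-x) l.+1 = poch (-x) l * (-x + l%:R) by rewrite pochS.
rewrite /=.
have -> : p * (N%:R - x) * (poch (- (x + 1)) l.+1 - poch (- x) l.+1)
  = p * (N%:R - x) * (-(x+1) * poch (-x) l - poch (-x) l * (-x + l%:R)).
  by rewrite a1 a2.
have -> : (1 - p) * x * (poch (- x) l.+1 - poch (- (x - 1)) l.+1)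
  = (1 - p) * x * (-x * poch (-x + 1) l - poch (-x + 1) l * (-x + 1 + l%:R)).
  by rewrite a3 a4.
have hB : x * poch (-x + 1) l = - (poch (-x) l * (-x + l%:R)).
  by rewrite -a2 a4; ring.
have -> : (1 - p) * x * (-x * poch (-x + 1) l - poch (-x + 1) l * (-x + 1 + l%:R))
  = - (1 - p) * (l%:R + 1) * (x * poch (-x + 1) l) by ring.
rewrite hB a2 -natr1; ring.
Qed.

Lemma Krav_diff n x : (n <= N)%N -> Lop (Krav N p n) x = - n%:R * Krav N p n x.
Proof.
move=> HnN.
rewrite /Lop !(Krav_sum N p n n.+2) //.
have -> : p * (N%:R - x) *
   (\sum_(l < n.+2) cc N p n l * poch (- (x + 1)) l - \sum_(l < n.+2) cc N p n l * poch (- x) l)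
   - (1 - p) * x *
   (\sum_(l < n.+2) cc N p n l * poch (- x) l - \sum_(l < n.+2) cc N p n l * poch (- (x - 1)) l)
   = \sum_(l < n.+2) cc N p n l * (- l%:R * poch (-x) l
         - p * l%:R * (N%:R - l%:R + 1) * poch (-x) l.-1).
  rewrite -!sumrB !mulr_sumr -sumrB; apply: eq_bigr => l _.
  rewrite -Lpb; ring.
have -> : \sum_(l < n.+2) cc N p n l * (- l%:R * poch (-x) l
         - p * l%:R * (N%:R - l%:R + 1) * poch (-x) l.-1)
   = \sum_(l < n.+2) (- l%:R * cc N p n l * poch (-x) l)
     - \sum_(l < n.+2) (p * l%:R * (N%:R - l%:R + 1) * cc N p n l * poch (-x) l.-1).
  by rewrite -sumrB; apply: eq_bigr => l _; ring.
rewrite [X in _ - X = _]big_ord_recl /= mulr0 !mul0r add0r.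
rewrite [X in X - _ = _]big_ord_recr /= (cc_zero N p n _ (ltnSn n)) mulr0 mul0r addr0.
rewrite mulr_sumr [RHS]big_ord_recr /= (cc_zero N p n _ (ltnSn n)) mul0r mulr0 addr0 -sumrB.
apply: eq_bigr => l _.
rewrite /bump add1n /=.
have E := cc_diff n l HnN.
have -> : p * l.+1%:R * (N%:R - l.+1%:R + 1) * cc N p n l.+1 * poch (- x) l
   = (p * l.+1%:R * (N%:R - l%:R) * cc N p n l.+1) * poch (- x) l.
  by rewrite -natr1; ring.
rewrite -E; ring.
Qed.

Lemma wgt_shift x : (x < N)%N ->
  (1 - p) * x.+1%:R * wgt N p x.+1 = p * (N%:R - x%:R) * wgt N p x.
Proof.
move=> H; rewrite /wgt -(subnSK H) !exprS.
have H1 : (x.+1%:R * 'C(N, x.+1)%:R : R) = (N%:R - x%:R) * 'C(N, x)%:R.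
  by rewrite -natrM mul_bin_left natrM natrB // ltnW.
transitivity (p * (1 - p) * (x.+1%:R * 'C(N, x.+1)%:R) * p ^+ x * (1 - p) ^+ (N - x.+1));
  first by ring.
rewrite H1; ring.
Qed.

Lemma Lop_sym (f g : R -> R) :
  \sum_(x < N.+1) Lop f x%:R * g x%:R * wgt N p x
  = - \sum_(x < N) p * (N%:R - x%:R) * wgt N p x * (f (x%:R + 1) - f x%:R)
        * (g (x%:R + 1) - g x%:R).
Proof.
have -> : \sum_(x < N.+1) Lop f x%:R * g x%:R * wgt N p x
  = \sum_(x < N.+1) p * (N%:R - x%:R) * (f (x%:R + 1) - f x%:R) * g x%:R * wgt N p x
    - \sum_(x < N.+1) (1 - p) * x%:R * (f x%:R - f (x%:R - 1)) * g x%:R * wgt N p x.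
  by rewrite -sumrB; apply: eq_bigr => x _; rewrite /Lop; ring.
rewrite [X in X - _ = _]big_ord_recr /= subrr mulr0 !mul0r addr0.
rewrite [X in _ - X = _]big_ord_recl /= mulr0 !mul0r add0r.
rewrite -sumrB -sumrN; apply: eq_bigr => -[x Hx] _ /=.
rewrite /bump add1n -natr1 addrK.
have W := wgt_shift x Hx.
rewrite -natr1 in W.
transitivity (p * (N%:R - x%:R) * (f (x%:R + 1) - f x%:R) * g x%:R * wgt N p x
  - ((1 - p) * (x%:R + 1) * wgt N p x.+1) * (f (x%:R + 1) - f x%:R) * g (x%:R + 1));
  first by ring.
rewrite W; ring.
Qed.

Lemma Krav_orth a b : (a <= N)%N -> (b <= N)%N -> a != b ->
  \sum_(x < N.+1) Krav N p a x%:R * Krav N p b x%:R * wgt N p x = 0.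
Proof.
move=> Ha Hb Hab.
set S := \sum_(x < N.+1) _.
have E1 : \sum_(x < N.+1) Lop (Krav N p a) x%:R * Krav N p b x%:R * wgt N p x = - a%:R * S.
  rewrite mulr_sumr; apply: eq_bigr => x _; rewrite Krav_diff //; ring.
have E2 : \sum_(x < N.+1) Lop (Krav N p b) x%:R * Krav N p a x%:R * wgt N p x = - b%:R * S.
  rewrite mulr_sumr; apply: eq_bigr => x _; rewrite Krav_diff //; ring.
rewrite !Lop_sym in E1 E2.
have E3 : - a%:R * S = - b%:R * S.
  rewrite -E1 -E2; congr (- _); apply: eq_bigr => x _; ring.
have : (b%:R - a%:R) * S = 0 by rewrite mulrBl; apply/eqP; rewrite subr_eq0; apply/eqP;
  move/eqP: E3; rewrite -subr_eq0 => /eqP E3; apply/eqP; rewrite -subr_eq0; apply/eqP;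
  rewrite -E3; ring.
move/eqP; rewrite mulf_eq0 => /orP [|/eqP //].
by rewrite subr_eq0 eqr_nat eq_sym (negbTE Hab).
Qed.

End Diff.
Section Poly.
Context {R : realFieldType}.
Variables (N : nat) (p : R).
Hypothesis p0 : 0 < p.

Definition MP (l : nat) : {poly R} := \prod_(i < l) ('X - (i%:R)%:P).
Definition Kp (n : nat) : {poly R} := \sum_(l < n.+1) (cc N p n l * (-1) ^+ l) *: MP l.

Lemma poch_fall (x : R) l : poch (- x) l = (-1) ^+ l * fall x l.
Proof.
elim: l => [|l IH]; first by rewrite poch0 fall0 expr0 mulr1.
by rewrite pochS fallS IH exprS; ring.
Qed.

Lemma MP_horner l (x : R) : (MP l).[x] = fall x l.
Proof.
rewrite /MP horner_prod /fall; apply: eq_bigr => i _.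
by rewrite hornerXsubC.
Qed.

Lemma MP_monic l : MP l \is monic.
Proof. exact: monic_prod_XsubC. Qed.

Lemma size_MP l : size (MP l) = l.+1.
Proof. by rewrite /MP size_prod_XsubC -[index_enum _]enumT size_enum_ord. Qed.

Lemma Kp_horner n x : (Kp n).[x] = Krav N p n x.
Proof.
rewrite (Krav_sum N p n n.+1 x) // /Kp horner_sum; apply: eq_bigr => l _.
by rewrite hornerZ MP_horner poch_fall; ring.
Qed.

Lemma poch_negn_n n : poch (- (n%:R : R)) n = (-1) ^+ n * n`!%:R.
Proof.
elim: n => [|n IH]; first by rewrite poch0 expr0 fact0 mulr1.
by rewrite pochSn IH factS natrM exprS; ring.
Qed.

Lemma cc_nn n : (n <= N)%N -> cc N p n n * (-1) ^+ n = 1.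
Proof.
move=> H.
have pn0 : p != 0 by rewrite gt_eqF.
have hP := poch_negN_neq0 (R:=R) N n H.
have e : (-1) ^+ n * (-1) ^+ n = 1 :> R by rewrite -exprMn mulrNN mulr1 expr1n.
rewrite /cc poch_negn_n.
have -> : p ^+ n * poch (- N%:R) n *
    ((-1) ^+ n * n`!%:R / (poch (- N%:R) n * n`!%:R) * p ^- n) * (-1) ^+ n
  = ((-1) ^+ n * (-1) ^+ n) * (p ^+ n / p ^+ n) * (poch (- (N%:R : R)) n / poch (- N%:R) n)
    * (n`!%:R / n`!%:R) by rewrite invfM; ring.
by rewrite e !divff ?mulr1 ?fact_neq0 ?expf_neq0.
Qed.

Lemma Kp_decomp n : (n <= N)%N ->
  Kp n = MP n + \sum_(l < n) (cc N p n l * (-1) ^+ l) *: MP l.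
Proof. by move=> H; rewrite /Kp big_ord_recr /= cc_nn // scale1r addrC. Qed.

Lemma size_Kp_low n : (size (\sum_(l < n) (cc N p n l * (-1) ^+ l) *: MP l)%R <= n)%N.
Proof.
apply: (leq_trans (size_sum _ _ (fun l : 'I_n => (cc N p n l * (-1) ^+ l) *: MP l))).
apply/bigmax_leqP => l _ /=.
by apply: (leq_trans (size_scale_leq _ _)); rewrite size_MP.
Qed.

Lemma size_Kp n : (n <= N)%N -> size (Kp n) = n.+1.
Proof.
move=> H; rewrite Kp_decomp // size_polyDl size_MP //.
by rewrite ltnS size_Kp_low.
Qed.

Lemma lead_Kp n : (n <= N)%N -> lead_coef (Kp n) = 1.
Proof.
move=> H; rewrite Kp_decomp // lead_coefDl; first exact/monicP/MP_monic.
by rewrite size_MP ltnS size_Kp_low.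
Qed.

Lemma span_lemma (B : nat -> {poly R}) m (q : {poly R}) :
  (forall i, (i < m)%N -> size (B i) = i.+1) -> (size q <= m)%N ->
  exists c : nat -> R, q = \sum_(i < m) c i *: B i.
Proof.
elim: m q => [|m IH] q HB Hq.
  exists (fun _ => 0); rewrite big_ord0.
  by apply/eqP; rewrite -size_poly_eq0 -leqn0.
have HBm := HB m (ltnSn m).
have lB : lead_coef (B m) != 0.
  by rewrite lead_coef_eq0 -size_poly_eq0 HBm.
set a := q`_m / lead_coef (B m).
have Hq' : (size (q - a *: B m)%R <= m)%N.
  apply/leq_sizeP => i Hi.
  rewrite coefB coefZ.
  rewrite leq_eqVlt in Hi; case/orP: Hi => [/eqP <-|Hi].
    have -> : (B m)`_m = lead_coef (B m) by rewrite lead_coefE HBm.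
    by rewrite /a mulfVK // subrr.
  have -> : q`_i = 0 by move/leq_sizeP: Hq; apply.
  have -> : (B m)`_i = 0.
    have : (size (B m) <= m.+1)%N by rewrite HBm.
    by move/leq_sizeP; apply.
  by rewrite mulr0 subrr.
have [c Hc] := IH (q - a *: B m) (fun i Hi => HB i (ltnW Hi)) Hq'.
exists (fun i => if i == m then a else c i).
rewrite big_ord_recr /= eqxx.
have -> : \sum_(i < m) (if (nat_of_ord i) == m then a else c i) *: B i
        = \sum_(i < m) c i *: B i.
  by apply: eq_bigr => i _; rewrite ifN // neq_ltn ltn_ord.
by rewrite -Hc subrK.
Qed.

End Poly.
Section Norm.
Context {R : realFieldType}.
Variables (N : nat) (p : R).
Hypothesis p0 : 0 < p.
Hypothesis p1 : p < 1.

Definition ipK (a b : nat) : R :=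
  \sum_(x < N.+1) Krav N p a x%:R * Krav N p b x%:R * wgt N p x.
Definition ipX (a b : nat) : R :=
  \sum_(x < N.+1) x%:R * Krav N p a x%:R * Krav N p b x%:R * wgt N p x.

Lemma knormE n : knorm N p n = ipK n n.
Proof. by apply: eq_bigr => x _; rewrite expr2. Qed.

Lemma ipK_orth a b : (a <= N)%N -> (b <= N)%N -> a != b -> ipK a b = 0.
Proof. exact: Krav_orth. Qed.

Lemma ipX_rec a b : (a.+1 <= N)%N ->
  ipX a b = ipK a.+1 b + alpha N p a * ipK a b + beta N p a * ipK a.-1 b.
Proof.
move=> H; rewrite /ipX /ipK !mulr_sumr -!big_split /=; apply: eq_bigr => x _.
rewrite Krav_rec //; ring.
Qed.

Lemma ipX_sym a b : ipX a b = ipX b a.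
Proof. by apply: eq_bigr => x _; ring. Qed.

Lemma wgt_ge0 x : 0 <= wgt N p x.
Proof.
have h1 : 0 <= 1 - p by rewrite subr_ge0 ltW.
have h2 : 0 <= p by rewrite ltW.
by rewrite /wgt !mulr_ge0 // exprn_ge0.
Qed.

Lemma knorm0_pos : 0 < knorm N p 0.
Proof.
rewrite /knorm big_ord_recl /=.
apply: (@lt_le_trans _ _ (Krav N p 0 0%:R ^+ 2 * wgt N p 0)).
  by rewrite Krav0 expr1n mul1r /wgt bin0 expr0 subn0 !mul1r exprn_gt0 // subr_gt0.
rewrite lerDl; apply: sumr_ge0 => i _; rewrite mulr_ge0 ?sqr_ge0 ?wgt_ge0 //.
Qed.

Lemma beta_pos k : (1 <= k)%N -> (k <= N)%N -> 0 < beta N p k.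
Proof.
move=> H1 H2; rewrite /beta.
have a : (1 : R) <= k%:R by rewrite (ler_nat R 1 k).
have b : (k%:R : R) <= N%:R by rewrite ler_nat.
have c : (0 : R) < N%:R - k%:R + 1 by lra.
have := p1; have := p0; rewrite !mulr_gt0 // ?subr_gt0 //; lra.
Qed.

Lemma knorm_rec k : (1 <= k)%N -> (k.+1 <= N)%N ->
  knorm N p k = beta N p k * knorm N p k.-1.
Proof.
move=> H1 H2.
have e1 : ipX k.-1 k = ipK k k.
  rewrite ipX_rec ?prednK //; last lia.
  rewrite (ipK_orth k.-1 k) ?(ipK_orth k.-1.-1 k); try lia. ring.
have e2 : ipX k k.-1 = beta N p k * ipK k.-1 k.-1.
  rewrite ipX_rec // (ipK_orth k.+1 k.-1) ?(ipK_orth k k.-1); try lia. ring.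
by rewrite !knormE -e1 ipX_sym e2.
Qed.

Lemma knorm_pos k : (k.+1 <= N)%N -> 0 < knorm N p k.
Proof.
elim: k => [|k IH] H; first exact: knorm0_pos.
rewrite knorm_rec //= mulr_gt0 ?IH ?beta_pos //; lia.
Qed.

Lemma knorm_neq0 k : (k.+1 <= N)%N -> knorm N p k != 0.
Proof. by move=> H; rewrite gt_eqF ?knorm_pos. Qed.

Lemma CD M x y : (1 <= M)%N -> (M <= N)%N ->
  (x - y) * \sum_(k < M) Krav N p k x * Krav N p k y / knorm N p k
  = (Krav N p M x * Krav N p M.-1 y - Krav N p M.-1 x * Krav N p M y) / knorm N p M.-1.
Proof.
elim: M => [//|M IH] H1 H2.
case: M IH H1 H2 => [|M] IH H1 H2.
  rewrite big_ord1 /= !Krav0.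
  have r0 := Krav_rec N p p0 0 x H2; have r0' := Krav_rec N p p0 0 y H2.
  rewrite /= !Krav0 /beta !mul0r !addr0 !mulr1 in r0 r0'.
  have -> : Krav N p 1 x * 1 - 1 * Krav N p 1 y = x - y.
    by rewrite mulr1 mul1r [in RHS]r0 [in RHS]r0'; ring.
  by rewrite !mul1r.
rewrite big_ord_recr /= mulrDr IH //; last lia.
have n0 := knorm_neq0 M (ltnW H2).
have n1 := knorm_neq0 M.+1 H2.
have bn : beta N p M.+1 != 0 by rewrite gt_eqF ?beta_pos //; lia.
have rx := Krav_rec N p p0 M.+1 x H2.
have ry := Krav_rec N p p0 M.+1 y H2.
have -> : (x - y) * (Krav N p M.+1 x * Krav N p M.+1 y / knorm N p M.+1)
   = ((x * Krav N p M.+1 x) * Krav N p M.+1 y - Krav N p M.+1 x * (y * Krav N p M.+1 y))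
      / knorm N p M.+1 by ring.
rewrite rx ry /= (knorm_rec M.+1) //.
field.
by rewrite n0 bn.
Qed.

End Norm.
Section CS.
Context {R : realFieldType}.

Lemma sum_quad (M : nat) (w u v : 'I_M -> R) (a c : R) :
  \sum_(i < M) w i * (a * v i - c * u i) ^+ 2
  = a ^+ 2 * (\sum_(i < M) w i * v i ^+ 2) - 2 * a * c * (\sum_(i < M) w i * u i * v i)
    + c ^+ 2 * (\sum_(i < M) w i * u i ^+ 2).
Proof.
rewrite !mulr_sumr -sumrB -big_split /=; apply: eq_bigr => i _; ring.
Qed.

Lemma CSineq (M : nat) (w u v : 'I_M -> R) :
  (forall i, 0 <= w i) ->
  (\sum_(i < M) w i * u i * v i) ^+ 2
  <= (\sum_(i < M) w i * u i ^+ 2) * (\sum_(i < M) w i * v i ^+ 2).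
Proof.
move=> hw.
set A := \sum_(i < M) w i * u i ^+ 2.
set B := \sum_(i < M) w i * v i ^+ 2.
set C := \sum_(i < M) w i * u i * v i.
have pos : forall a c, 0 <= \sum_(i < M) w i * (a * v i - c * u i) ^+ 2.
  by move=> a c; apply: sumr_ge0 => i _; rewrite mulr_ge0 ?sqr_ge0.
have hA : 0 <= A by apply: sumr_ge0 => i _; rewrite mulr_ge0 ?sqr_ge0.
have hB : 0 <= B by apply: sumr_ge0 => i _; rewrite mulr_ge0 ?sqr_ge0.
have F1 : 0 <= A * (A * B - C ^+ 2).
  have := pos A C; rewrite sum_quad -/A -/B -/C.
  by have -> : A ^+ 2 * B - 2 * A * C * C + C ^+ 2 * A = A * (A * B - C ^+ 2) by ring.
have C' : \sum_(i < M) w i * v i * u i = C by apply: eq_bigr => i _; ring.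
have pos' : forall a c, 0 <= \sum_(i < M) w i * (a * u i - c * v i) ^+ 2.
  by move=> a c; apply: sumr_ge0 => i _; rewrite mulr_ge0 ?sqr_ge0.
have F2 : 0 <= B * (A * B - C ^+ 2).
  have := pos' B C; rewrite (sum_quad _ w v u) -/A -/B C'.
  by have -> : B ^+ 2 * A - 2 * B * C * C + C ^+ 2 * B = B * (A * B - C ^+ 2) by ring.
have F3 : 0 <= A + B + 2 * C.
  have := pos 1 (-1); rewrite sum_quad -/A -/B -/C.
  by have -> : 1 ^+ 2 * B - 2 * 1 * -1 * C + (-1) ^+ 2 * A = A + B + 2 * C by ring.
have F4 : 0 <= A + B - 2 * C.
  have := pos 1 1; rewrite sum_quad -/A -/B -/C.
  by have -> : 1 ^+ 2 * B - 2 * 1 * 1 * C + 1 ^+ 2 * A = A + B - 2 * C by ring.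
rewrite -subr_ge0.
have [A0|A0] := eqVneq A 0.
  have [B0|B0] := eqVneq B 0.
    rewrite A0 B0 in F3 F4 *.
    have -> : C = 0 by lra.
    by rewrite expr0n /= mul0r subrr.
  have Bp : 0 < B by rewrite lt0r B0.
  rewrite pmulr_rge0 // in F2.
have Ap : 0 < A by rewrite lt0r A0.
by rewrite pmulr_rge0 // in F1.
Qed.

End CS.
Section Main.
Context {R : realFieldType}.
Variables (N : nat) (p lam mu : R) (j : nat).
Hypothesis p0 : 0 < p.
Hypothesis p1 : p < 1.
Hypothesis lam0 : 0 < lam.
Hypothesis mu0 : 0 < mu.

Lemma fall_nz (u : R) k i : fall u k.+1 != 0 -> (i <= k)%N -> u - i%:R != 0.
Proof.
elim: k => [|k IH] H Hi.
  by move: Hi; rewrite leqn0 => /eqP ->; move: H; rewrite fallS fall0 mul1r.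
move: H; rewrite fallS mulf_eq0 negb_or => /andP [H1 H2].
rewrite leq_eqVlt in Hi; case/orP: Hi => [/eqP ->|Hi] //.
by apply: IH.
Qed.

Lemma kern_CD m z y : (1 <= m)%N -> (m < N)%N -> fall (z - y) j.+1 != 0 ->
  kern N p m.-1 0 j z y = sA N p j m z y * Krav N p m z + sB N p j m z y * Krav N p m.-1 z.
Proof.
move=> H1 H2 Hf.
have kn : knorm N p m.-1 != 0 by apply: knorm_neq0 => //; lia.
set W := fun y' => (Krav N p m z / knorm N p m.-1) * Krav N p m.-1 y'
                   + (- Krav N p m.-1 z / knorm N p m.-1) * Krav N p m y'.
have E1 : kern N p m.-1 0 j z y
   = fdeltan j (fun y' => \sum_(k < m) (Krav N p k z / knorm N p k) * Krav N p k y') y.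
  rewrite fdeltan_sum /kern prednK //; apply: eq_bigr => k _; rewrite fdeltan0; ring.
have E2 : fdeltan j (fun y' => \sum_(k < m) (Krav N p k z / knorm N p k) * Krav N p k y') y
   = fdeltan j (fun y' => W y' / (z - y')) y.
  apply: fdeltan_loc => i Hi.
  have hz : z - (y + i%:R) != 0 by rewrite opprD addrA; apply: fall_nz Hf Hi.
  have := CD N p p0 p1 m z (y + i%:R) H1 (ltnW H2).
  move=> C; apply: (mulfI hz).
  have -> : \sum_(k < m) Krav N p k z / knorm N p k * Krav N p k (y + i%:R)
     = \sum_(k < m) Krav N p k z * Krav N p k (y + i%:R) / knorm N p k.
    by apply: eq_bigr => k _; ring.
  rewrite C [_ * (W _ / _)]mulrC divfK // /W; field.
  done.
rewrite E1 E2 fdeltan_quot //.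
have E3 : forall k, fdeltan k W y = (Krav N p m z / knorm N p m.-1) * fdeltan k (Krav N p m.-1) y
                       + (- Krav N p m.-1 z / knorm N p m.-1) * fdeltan k (Krav N p m) y.
  by move=> k; rewrite /W fdeltan_lin.
under eq_bigr do rewrite E3.
rewrite /sA /sB; move: (knorm N p m.-1) kn => KN kn.
rewrite !mulr_sumr !mulr_suml -big_split /=.
apply: eq_bigr => k _.
field.
by rewrite fact_neq0 kn Hf.
Qed.

Lemma Q_expand m Q : (1 <= m)%N -> (m < N)%N -> is_KravSob N p lam mu j m Q ->
  forall z, Q.[z] = Krav N p m z - lam * fdeltan j (horner Q) 0 * kern N p m.-1 0 j z 0
                    - mu * fdeltan j (horner Q) N%:R * kern N p m.-1 0 j z N%:R.
Proof.
move=> H1 H2 [Hmon [Hsz Horth]] z.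
set a := fdeltan j (horner Q) 0.
set b := fdeltan j (horner Q) N%:R.
have HB : forall i, (i < m.+1)%N -> size (Kp N p i) = i.+1.
  by move=> i Hi; apply: size_Kp => //; lia.
have [c Hc] := span_lemma (Kp N p) m.+1 Q HB (eq_leq Hsz).
have hQx : forall x, Q.[x] = \sum_(i < m.+1) c i * Krav N p i x.
  move=> x; rewrite Hc horner_sum; apply: eq_bigr => i _.
  by rewrite hornerZ Kp_horner.
have cm : c m = 1.
  have : Q`_m = 1 by move/monicP: Hmon; rewrite lead_coefE Hsz.
  rewrite Hc coef_sum big_ord_recr /= coefZ.
  have -> : (Kp N p m)`_m = 1.
    by rewrite -(lead_Kp N p p0 m) ?lead_coefE ?size_Kp //; lia.
  rewrite big1 ?add0r ?mulr1 //.
  move=> i _; rewrite coefZ; have hi := ltn_ord i.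
  have : (size (Kp N p i) <= m)%N by rewrite size_Kp //; lia.
  by move/leq_sizeP => -> //; rewrite mulr0.
have cl : forall i : 'I_m, c i * knorm N p i
    = - (lam * a * fdeltan j (Krav N p i) 0 + mu * b * fdeltan j (Krav N p i) N%:R).
  move=> i; have hi := ltn_ord i.
  have hs : (size (Kp N p i) <= m)%N by rewrite size_Kp //; lia.
  have := Horth (Kp N p i) hs.
  rewrite /sob_ip -/a -/b.
  rewrite (fdeltan_ext (horner (Kp N p i)) (Krav N p i) j 0 (Kp_horner N p i)).
  rewrite (fdeltan_ext (horner (Kp N p i)) (Krav N p i) j N%:R (Kp_horner N p i)).
  have -> : \sum_(x < N.+1) Q.[x%:R] * (Kp N p i).[x%:R] * wgt N p x = c i * knorm N p i.
    transitivity (\sum_(l < m.+1) c l * ipK N p l i).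
      rewrite /ipK; under eq_bigr do rewrite hQx Kp_horner !mulr_suml.
      rewrite exchange_big /=; apply: eq_bigr => l _; rewrite mulr_sumr.
      by apply: eq_bigr => x _; ring.
    rewrite (bigD1 (widen_ord (leqnSn m) i)) //= big1 ?addr0 ?knormE //.
    move=> l /negP Hl; have hl := ltn_ord l; rewrite (ipK_orth N p p0) ?mulr0 //; try lia.
    apply/eqP => E; apply: Hl; apply/eqP; apply: val_inj; by rewrite /= E.
  move=> E; apply/eqP; rewrite -subr_eq0 opprK; apply/eqP; rewrite addrA; exact: E.
have kn : forall i : 'I_m, knorm N p i != 0.
  by move=> i; have hi := ltn_ord i; apply: knorm_neq0 => //; lia.
rewrite hQx big_ord_recr /= cm mul1r addrC /kern prednK //.
rewrite (_ : \sum_(i < m) c i * Krav N p i z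
   = - (lam * a) * \sum_(k < m) fdeltan 0 (Krav N p k) z * fdeltan j (Krav N p k) 0 / knorm N p k
     + - (mu * b) * \sum_(k < m) fdeltan 0 (Krav N p k) z * fdeltan j (Krav N p k) N%:R / knorm N p k);
  first ring.
rewrite !mulr_sumr -big_split /=; apply: eq_bigr => i _.
have ci : c i = - (lam * a * fdeltan j (Krav N p i) 0 + mu * b * fdeltan j (Krav N p i) N%:R)
                / knorm N p i.
  by rewrite -cl mulfK.
rewrite ci /=; field.
exact: kn.
Qed.

Lemma fdeltan_kern m' w y :
  fdeltan j (fun z => kern N p m' 0 j z y) w = kern N p m' j j w y.
Proof.
transitivity (fdeltan j (fun z => \sum_(k < m'.+1)
    (fdeltan j (Krav N p k) y / knorm N p k) * Krav N p k z) w).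
  by apply: fdeltan_ext => z; apply: eq_bigr => k _; rewrite fdeltan0; ring.
by rewrite fdeltan_sum; apply: eq_bigr => k _; ring.
Qed.

Lemma lin_system m Q : (1 <= m)%N -> (m < N)%N -> is_KravSob N p lam mu j m Q ->
  fdeltan j (horner Q) 0 = d0 N p j m - lam * fdeltan j (horner Q) 0 * k00 N p j m
                           - mu * fdeltan j (horner Q) N%:R * k0N N p j m /\
  fdeltan j (horner Q) N%:R = dN N p j m - lam * fdeltan j (horner Q) 0 * kN0 N p j m
                           - mu * fdeltan j (horner Q) N%:R * kNN N p j m.
Proof.
move=> H1 H2 HQ.
set a := fdeltan j (horner Q) 0.
set b := fdeltan j (horner Q) N%:R.
have E : forall w, fdeltan j (horner Q) w = fdeltan j (Krav N p m) w
    - lam * a * kern N p m.-1 j j w 0 - mu * b * kern N p m.-1 j j w N%:R.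
  move=> w.
  rewrite (fdeltan_ext (horner Q) (fun z => 1 * Krav N p m z + 1 *
     ((- (lam * a)) * kern N p m.-1 0 j z 0 + (- (mu * b)) * kern N p m.-1 0 j z N%:R)) j w);
    last by move=> z; rewrite (Q_expand m Q H1 H2 HQ z) -/a -/b; ring.
  rewrite fdeltan_lin fdeltan_lin !fdeltan_kern; ring.
split.
  by rewrite {1}/a E.
by rewrite {1}/b E.
Qed.

Lemma deltaS_pos m : (1 <= m)%N -> (m < N)%N -> 0 < deltaS N p lam mu j m.
Proof.
move=> H1 H2.
set w := fun k : 'I_m.-1.+1 => (knorm N p k)^-1.
set u := fun k : 'I_m.-1.+1 => fdeltan j (Krav N p k) 0.
set v := fun k : 'I_m.-1.+1 => fdeltan j (Krav N p k) N%:R.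
have hw : forall k, 0 <= w k.
  move=> k; have hk := ltn_ord k; rewrite /w invr_ge0 ltW //.
  by apply: knorm_pos => //; lia.
have e00 : k00 N p j m = \sum_(k < m.-1.+1) w k * u k ^+ 2.
  by apply: eq_bigr => k _; rewrite /w /u; ring.
have eNN : kNN N p j m = \sum_(k < m.-1.+1) w k * v k ^+ 2.
  by apply: eq_bigr => k _; rewrite /w /v; ring.
have e0N : k0N N p j m = \sum_(k < m.-1.+1) w k * u k * v k.
  by apply: eq_bigr => k _; rewrite /w /u /v; ring.
have eN0 : kN0 N p j m = \sum_(k < m.-1.+1) w k * u k * v k.
  by apply: eq_bigr => k _; rewrite /w /u /v; ring.
have CS := CSineq _ w u v hw.
have A0 : 0 <= \sum_(k < m.-1.+1) w k * u k ^+ 2.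
  by apply: sumr_ge0 => k _; rewrite mulr_ge0 ?sqr_ge0.
have B0 : 0 <= \sum_(k < m.-1.+1) w k * v k ^+ 2.
  by apply: sumr_ge0 => k _; rewrite mulr_ge0 ?sqr_ge0.
rewrite /deltaS e00 eNN e0N eN0.
move: CS A0 B0.
set A := \sum_(k < m.-1.+1) w k * u k ^+ 2.
set B := \sum_(k < m.-1.+1) w k * v k ^+ 2.
set C := \sum_(k < m.-1.+1) w k * u k * v k.
move=> CS A0 B0.
have l0 := lam0; have m0 := mu0.
have t1 : 0 <= lam * A by rewrite mulr_ge0 // ltW.
have t2 : 0 <= mu * B by rewrite mulr_ge0 // ltW.
have t3 : 0 <= lam * mu * (A * B - C ^+ 2).
  by rewrite !mulr_ge0 ?subr_ge0 // ltW.
have -> : (1 + lam * A) * (1 + mu * B) - lam * mu * C * C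
   = 1 + lam * A + mu * B + lam * mu * (A * B - C ^+ 2) by ring.
move: t1 t2 t3; set X := lam * A; set Y := mu * B; set Z := lam * mu * _.
move=> t1 t2 t3; lra.
Qed.

Lemma main_sec n Q : (2 <= n)%N -> (n <= N)%N -> is_KravSob N p lam mu j n.-1 Q ->
  forall x : R, fall x j.+1 != 0 -> fall (x - N%:R) j.+1 != 0 ->
    Q.[x] = C2 N p lam mu j n x * Krav N p n x + D2 N p lam mu j n x * Krav N p n.-1 x.
Proof.
move=> Hn2 HnN HQ x Hx0 HxN.
have hn : n = n.-1.+1 by rewrite prednK //; lia.
move: HQ; rewrite /C2 /D2.
move: hn HnN Hn2; set m := n.-1 => hn HnN Hn2 HQ.
have H1 : (1 <= m)%N by lia.
have H2 : (m < N)%N by lia.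
have [Sa Sb] := lin_system m Q H1 H2 HQ.
move: Sa Sb.
set a := fdeltan j (horner Q) 0.
set b := fdeltan j (horner Q) N%:R.
move=> Sa Sb.
have dpos := deltaS_pos m H1 H2.
have dn : deltaS N p lam mu j m != 0 by rewrite gt_eqF.
have ePhi1 : Phi1 N p lam mu j m = a.
  have Ed0 : d0 N p j m = a + lam * a * k00 N p j m + mu * b * k0N N p j m.
    by rewrite {1}Sa; ring.
  have EdN : dN N p j m = b + lam * a * kN0 N p j m + mu * b * kNN N p j m.
    by rewrite {1}Sb; ring.
  rewrite /Phi1 (_ : d0 N p j m * (1 + mu * kNN N p j m) - mu * k0N N p j m * dN N p j m
                     = a * deltaS N p lam mu j m) ?mulfK //.
  by rewrite /deltaS Ed0 EdN; ring.
have ePhi2 : Phi2 N p lam mu j m = b.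
  have Ed0 : d0 N p j m = a + lam * a * k00 N p j m + mu * b * k0N N p j m.
    by rewrite {1}Sa; ring.
  have EdN : dN N p j m = b + lam * a * kN0 N p j m + mu * b * kNN N p j m.
    by rewrite {1}Sb; ring.
  rewrite /Phi2 (_ : (1 + lam * k00 N p j m) * dN N p j m - lam * kN0 N p j m * d0 N p j m
                     = b * deltaS N p lam mu j m) ?mulfK //.
  by rewrite /deltaS Ed0 EdN; ring.
have QE := Q_expand m Q H1 H2 HQ x.
rewrite -/a -/b (kern_CD m x 0) ?subr0 // (kern_CD m x N%:R) // in QE.
have step : Q.[x] = C1 N p lam mu j m x * Krav N p m x + D1 N p lam mu j m x * Krav N p m.-1 x.
  by rewrite QE /C1 /D1 ePhi1 ePhi2; ring.
have bm : beta N p m != 0 by rewrite gt_eqF // beta_pos //; lia.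
have rec := Krav_rec N p p0 m x.
rewrite -hn in rec; have rec' := rec HnN.
have rK : Krav N p m.-1 x = (x * Krav N p m x - Krav N p n x - alpha N p m * Krav N p m x) / beta N p m.
  by rewrite rec'; field.
rewrite step rK.
rewrite /C2 -/m.
move: (C1 N p lam mu j m x) (D1 N p lam mu j m x) => c1 d1.
field.
exact: bm.
Qed.

End Main.

Theorem mainTheorem4 (R : realFieldType) (N : nat) (p lam mu : R) (j n : nat)
    (Q : {poly R}) :
  (1 <= N)%N -> 0 < p -> p < 1 -> 0 < lam -> 0 < mu ->
  (2 <= n)%N -> (n <= N)%N ->
  is_KravSob N p lam mu j n.-1 Q ->
  forall x : R, fall x j.+1 != 0 -> fall (x - N%:R) j.+1 != 0 ->
    Q.[x] = C2 N p lam mu j n x * Krav N p n x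
            + D2 N p lam mu j n x * Krav N p n.-1 x.
Proof.
move=> _ p0 p1 l0 m0 H2 HN HQ x h1 h2.
exact: (main_sec N p lam mu j p0 p1 l0 m0 n Q H2 HN HQ x h1 h2).
Qed.
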